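(* Let $E\subseteq\mathbb{R}$. The set $\mathbf{AC}(E)$ of all Abel continuous functions on $E$ is a complete subspace of the space of all continuous real functions on $E$ with respect to uniform convergence: every sequence in $\mathbf{AC}(E)$ that is uniformly Cauchy on $E$ converges uniformly on $E$ to a function belonging to $\mathbf{AC}(E)$.
   Context: A sequence $(p_n)_{n\ge0}$ is Abel convergent to $\ell$ if $\sum_{k=0}^{\infty}p_k x^k$ converges for every $0\le x<1$ and $\lim_{x\to 1^-}(1-x)\sum_{k=0}^{\infty}p_k x^k=\ell$. A function $g:E\to\mathbb{R}$ is Abel continuous on $E$ if for every sequence $(p_n)$ in $E$ Abel convergent to some $\ell\in E$, $(g(p_n))$ is Abel convergent to $g(\ell)$. *)

(* Defs.v *)
From Stdlib Require Import Reals.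
From Coquelicot Require Import Coquelicot.
Open Scope R_scope.

Definition abel_convergent (p : nat -> R) (l : R) : Prop :=
  (forall x : R, 0 <= x < 1 -> ex_series (fun k => p k * x ^ k)) /\
  filterlim (fun x => (1 - x) * Series (fun k => p k * x ^ k))
            (at_left 1) (locally l).

Definition abel_continuous (E : R -> Prop) (g : R -> R) : Prop :=
  forall (p : nat -> R) (l : R),
    (forall n, E (p n)) -> E l -> abel_convergent p l ->
    abel_convergent (fun n => g (p n)) (g l).

Definition unif_cauchy_on (E : R -> Prop) (f : nat -> R -> R) : Prop :=
  forall eps : R, 0 < eps -> exists N : nat, forall m n : nat,
    (N <= m)%nat -> (N <= n)%nat -> forall x, E x -> Rabs (f m x - f n x) < eps.

Definition unif_conv_on (E : R -> Prop) (f : nat -> R -> R) (g : R -> R) : Prop :=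
  forall eps : R, 0 < eps -> exists N : nat, forall n : nat,
    (N <= n)%nat -> forall x, E x -> Rabs (f n x - g x) < eps.

(* Main.v *)
Require Import Defs.
From Stdlib Require Import Reals Lra.
From Coquelicot Require Import Coquelicot.
Open Scope R_scope.

Lemma series_approx (a b : nat -> R) (d x : R) :
  0 <= x < 1 -> ex_series b ->
  (forall k, Rabs (a k - b k) <= d * x ^ k) ->
  ex_series a /\ (1 - x) * Rabs (Series a - Series b) <= d.
Proof.
  intros Hx Hb Hab.
  assert (Hxa : Rabs x < 1) by (rewrite Rabs_pos_eq; lra).
  assert (Hg : ex_series (fun k => d * x ^ k)).
  { apply (ex_series_scal_l d (fun k => x ^ k)). now apply ex_series_geom. }
  assert (Hd : ex_series (fun k => Rabs (a k - b k))).
  { apply (@ex_series_le R_AbsRing R_CompleteNormedModule) with (b := fun k => d * x ^ k); auto.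
    intros k. change (Rabs (Rabs (a k - b k)) <= d * x ^ k).
    rewrite Rabs_Rabsolu. auto. }
  assert (Hd' : ex_series (fun k => a k - b k)) by (now apply ex_series_Rabs).
  assert (Ha : ex_series a).
  { apply ex_series_ext with (a := fun k => plus (a k - b k) (b k)).
    - intros k. unfold plus; simpl; ring.
    - now apply (@ex_series_plus R_AbsRing R_NormedModule). }
  split; auto.
  rewrite <- Series_minus by auto.
  eapply Rle_trans.
  { apply Rmult_le_compat_l; [lra|]. apply Series_Rabs; auto. }
  eapply Rle_trans.
  { apply Rmult_le_compat_l; [lra|]. apply Series_le with (b := fun k => d * x ^ k); auto.
    intros k; split; [apply Rabs_pos| auto]. }
  rewrite Series_scal_l, Series_geom by auto.
  right. field. lra.
Qed.

Lemma ball_R (y e z : R) : ball y e z <-> Rabs (z - y) < e.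
Proof. reflexivity. Qed.

Lemma approx (E : R -> Prop) (g h : R -> R) (d : R) :
  abel_continuous E h -> (forall y, E y -> Rabs (g y - h y) <= d) ->
  forall p l, (forall n, E (p n)) -> E l -> abel_convergent p l ->
  (forall x, 0 <= x < 1 -> ex_series (fun k => g (p k) * x ^ k)) /\
  (0 < d -> at_left 1 (fun x => Rabs ((1 - x) * Series (fun k => g (p k) * x ^ k) - g l) < 3 * d)).
Proof.
  intros Hh Hgh p l Hp Hl Hpl.
  destruct (Hh p l Hp Hl Hpl) as [Hs Hlim].
  assert (Hk : forall x, 0 <= x < 1 -> forall k,
    Rabs (g (p k) * x ^ k - h (p k) * x ^ k) <= d * x ^ k).
  { intros x Hx k. replace (g (p k) * x ^ k - h (p k) * x ^ k) with ((g (p k) - h (p k)) * x ^ k) by ring.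
    rewrite Rabs_mult, (Rabs_pos_eq (x ^ k)) by (apply pow_le; lra).
    apply Rmult_le_compat_r; [apply pow_le; lra| auto]. }
  split.
  - intros x Hx. exact (proj1 (series_approx _ _ d x Hx (Hs x Hx) (Hk x Hx))).
  - intros Hd.
    apply (proj1 (filterlim_locally _ _)) with (eps := mkposreal d Hd) in Hlim.
    assert (H01 : at_left 1 (fun x => 0 <= x < 1)).
    { exists (mkposreal 1 Rlt_0_1). intros y Hy Hy1.
      apply ball_R in Hy. apply Rabs_def2 in Hy. unfold minus, plus, opp in Hy; simpl in Hy. lra. }
    generalize (filter_and _ _ Hlim H01).
    apply filter_imp. intros x [Hb Hx].
    apply ball_R in Hb. simpl in Hb.
    destruct (series_approx _ _ d x Hx (Hs x Hx) (Hk x Hx)) as [_ Hb2].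
    assert (Hl' := Hgh l Hl).
    set (Sg := Series (fun k => g (p k) * x ^ k)) in *.
    set (Sh := Series (fun k => h (p k) * x ^ k)) in *.
    replace ((1 - x) * Sg - g l) with
      ((1 - x) * (Sg - Sh) + ((1 - x) * Sh - h l) - (g l - h l)) by ring.
    eapply Rle_lt_trans; [apply Rabs_triang|].
    rewrite Rabs_Ropp.
    eapply Rle_lt_trans; [apply Rplus_le_compat_r; apply Rabs_triang|].
    rewrite Rabs_mult, (Rabs_pos_eq (1 - x)) by lra.
    change (Rabs ((1 - x) * Sh - h l) < d) in Hb. lra.
Qed.

Theorem corollary10 (E : R -> Prop) (f : nat -> R -> R) :
  (forall n : nat, abel_continuous E (f n)) ->
  unif_cauchy_on E f ->
  exists g : R -> R, unif_conv_on E f g /\ abel_continuous E g.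
Proof.
  intros Hf Hc.
  set (g := fun x => real (Lim_seq (fun n => f n x))).
  assert (Hlim : forall x, E x -> is_lim_seq (fun n => f n x) (g x)).
  { intros x Ex.
    assert (H : ex_finite_lim_seq (fun n => f n x)).
    { apply ex_lim_seq_cauchy_corr. intros eps.
      destruct (Hc eps (cond_pos eps)) as [N HN]. exists N.
      intros n m Hn Hm. now apply HN. }
    destruct H as [l Hl]. unfold g. rewrite (is_lim_seq_unique _ _ Hl). exact Hl. }
  assert (Hu : forall eps, 0 < eps -> exists N, forall n, (N <= n)%nat ->
            forall x, E x -> Rabs (f n x - g x) <= eps).
  { intros eps He. destruct (Hc eps He) as [N HN]. exists N.
    intros n Hn x Ex. apply Rnot_lt_le. intros Hgt.
    assert (Hd : 0 < Rabs (f n x - g x) - eps) by lra.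
    pose proof (proj2 (is_lim_seq_spec _ _) (Hlim x Ex)) as Hl.
    destruct (Hl (mkposreal _ Hd)) as [M HM]. simpl in HM.
    specialize (HM (Nat.max N M) (Nat.le_max_r _ _)).
    specialize (HN n (Nat.max N M) Hn (Nat.le_max_l _ _) x Ex).
    assert (Rabs (f n x - g x) <= Rabs (f n x - f (Nat.max N M) x) + Rabs (f (Nat.max N M) x - g x)).
    { replace (f n x - g x) with ((f n x - f (Nat.max N M) x) + (f (Nat.max N M) x - g x)) by ring.
      apply Rabs_triang. }
    lra. }
  exists g. split.
  - intros eps He. destruct (Hu (eps / 2)) as [N HN]; [lra|]. exists N.
    intros n Hn x Ex. specialize (HN n Hn x Ex). lra.
  - intros p l Hp Hl Hpl.
    assert (Hb : forall d, 0 < d -> exists N, forall y, E y -> Rabs (g y - f N y) <= d).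
    { intros d Hd. destruct (Hu d Hd) as [N HN]. exists N. intros y Ey.
      rewrite Rabs_minus_sym. apply (HN N (Nat.le_refl _) y Ey). }
    split.
    + destruct (Hb 1 Rlt_0_1) as [N HN].
      exact (proj1 (approx E g (f N) 1 (Hf N) HN p l Hp Hl Hpl)).
    + apply filterlim_locally. intros eps.
      assert (He : 0 < eps / 3) by (destruct eps; simpl; lra).
      destruct (Hb _ He) as [N HN].
      generalize (proj2 (approx E g (f N) _ (Hf N) HN p l Hp Hl Hpl) He).
      apply filter_imp. intros x Hx. apply ball_R.
      replace (3 * (eps / 3)) with (pos eps) in Hx by field. exact Hx.
Qed.
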